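(* Let $d$ be a positive integer with $d \notin \{1, 3\}$, let $\mathbb{F}$ be a field, let $D_1 = \mathbb{F}((T))$, and let $D_2$ be a subring of $\overline{\mathbb{F}}^{\mathrm{alg}}((T))$. Consider the game of degree $d$ in which Nora and Wanda choose the polynomial coefficients from $D_1$. If Nora makes the last move, she can ensure that the final polynomial has no root in $D_2$.
   Context: $\mathbb{F}((T))$ denotes the field of formal Laurent series in the variable $T$ with coefficients in $\mathbb{F}$, and $\overline{\mathbb{F}}^{\mathrm{alg}}$ an algebraic closure of $\mathbb{F}$. The game: Nora and Wanda alternately choose coefficients of $f(x) = a_d x^d + \cdots + a_0$; on each move the current player picks a not-yet-chosen coefficient and assigns it a value in $D_1$, subject to $a_d \neq 0$, $a_0 \neq 0$. *)

(* Defs.v *)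
From HB Require Import structures.
From mathcomp Require Import all_boot all_order all_algebra.
From Stdlib Require Import ClassicalEpsilon.

Set Implicit Arguments.
Unset Strict Implicit.
Unset Printing Implicit Defensive.

Import Order.TTheory GRing.Theory Num.Theory.
Local Open Scope ring_scope.

(* Formal Laurent series R((T)), represented as coefficient functions   *)
(* f : int -> R whose support is bounded below (f n = coefficient of   *)
(* T^n).  Equality of Laurent series is equality of these functions.   *)
Section Laurent.
Variable R : nzRingType.

Definition laurentP (f : int -> R) : Prop :=
  exists N : int, forall n : int, n < N -> f n = 0.

(* some lower bound for the support (any valid one; chosen classically) *)
Definition lbound (f : int -> R) : int :=
  epsilon (inhabits (0 : int)) (fun N : int => forall n : int, n < N -> f n = 0).

Definition lzero : int -> R := fun _ => 0.
Definition lone : int -> R := fun n => if n == 0 then 1 else 0.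
Definition ladd (f g : int -> R) : int -> R := fun n => f n + g n.
Definition lopp (f : int -> R) : int -> R := fun n => - f n.
(* Cauchy product: (fg)_n = sum_{a <= k <= n - b} f_k g_{n-k} *)
Definition lmul (f g : int -> R) : int -> R := fun n =>
  let a := lbound f in let b := lbound g in
  \sum_(j < (absz (n - a - b)%R).+1) f (a + j%:Z)%R * g (n - a - j%:Z)%R.
Definition lpow (f : int -> R) (k : nat) : int -> R := iter k (lmul f) lone.

Definition is_lsubring (S : (int -> R) -> Prop) : Prop :=
  [/\ forall f, S f -> laurentP f,
      S lone,
      forall f g, S f -> S g -> S (ladd f g),
      forall f, S f -> S (lopp f) &
      forall f g, S f -> S g -> S (lmul f g)].

Definition leval (d : nat) (a : 'I_d.+1 -> int -> R) (x : int -> R) : int -> R :=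
  fun n => \sum_(i < d.+1) lmul (a i) (lpow x i) n.

End Laurent.

(* The coefficient game of degree d.  A position records, for each     *)
(* index i (coefficient of x^i), either None (not yet chosen) or the   *)
(* chosen value.  With n coefficients still to be chosen, the mover is *)
(* Nora iff n is odd: this is exactly "Nora makes the last move".      *)
Section Game.
Variables (A : Type) (d : nat) (valid : 'I_d.+1 -> A -> Prop)
          (goal : ('I_d.+1 -> A) -> Prop) (dflt : A).

Definition upd (s : 'I_d.+1 -> option A) (i : 'I_d.+1) (c : A) : 'I_d.+1 -> option A :=
  fun j => if j == i then Some c else s j.

Fixpoint nora_wins_from (n : nat) (s : 'I_d.+1 -> option A) : Prop :=
  match n with
  | 0 => goal (fun i => odflt dflt (s i))
  | n'.+1 =>
      if odd n'.+1 then
        exists i c, [/\ s i = None, valid i c & nora_wins_from n' (upd s i c)]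
      else
        forall i c, s i = None -> valid i c -> nora_wins_from n' (upd s i c)
  end.

Definition nora_wins_last : Prop := nora_wins_from d.+1 (fun _ => None).
End Game.

Definition coef_valid (F : nzRingType) (d : nat) (i : 'I_d.+1) (c : int -> F) : Prop :=
  laurentP c /\ ((nat_of_ord i == 0)%N || (nat_of_ord i == d) -> exists n, c n != 0).

(* Main.v *)
Require Import Defs.
From HB Require Import structures.
From mathcomp Require Import all_boot all_order all_algebra.
From Stdlib Require Import ClassicalEpsilon.
From mathcomp Require Import zify ring.
Import Order.TTheory GRing.Theory Num.Theory.
Local Open Scope ring_scope.
Set Implicit Arguments.
Unset Strict Implicit.

Section LaurentVal.
Variable R : idomainType.
Implicit Types f g x : int -> R.

Definition has_val f (A : int) := f A != 0 /\ forall k, k < A -> f k = 0.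

Lemma has_val_laurent f A : has_val f A -> laurentP f.
Proof. by case=> _ h; exists A. Qed.

Lemma lbound_spec f : laurentP f -> forall n, n < lbound f -> f n = 0.
Proof.
move=> hf; rewrite /lbound.
exact: (epsilon_spec (inhabits (0:int)) (fun N : int => forall n : int, n < N -> f n = 0) hf).
Qed.

Lemma lbound_le f A : has_val f A -> lbound f <= A.
Proof.
move=> hv; have hl := has_val_laurent hv; case: hv => hA h.
case: (lerP (lbound f) A) => // hlt.
by move: hA; rewrite (lbound_spec hl hlt) eqxx.
Qed.

Lemma lmul_low f g (A B : int) : (forall k, k < A -> f k = 0) ->
  (forall k, k < B -> g k = 0) -> forall n, n < A + B -> lmul f g n = 0.
Proof.
move=> hf hg n hn; rewrite /lmul big1 // => j _.
case: (ltP (lbound f + j%:Z) A) => h; first by rewrite hf // mul0r.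
by rewrite hg ?mulr0 //; lia.
Qed.

Lemma lmul_zero_l f g n : (forall k, f k = 0) -> lmul f g n = 0.
Proof. by move=> hf; rewrite /lmul big1 // => j _; rewrite hf mul0r. Qed.

Lemma lmul_zero_r f g n : (forall k, g k = 0) -> lmul f g n = 0.
Proof. by move=> hg; rewrite /lmul big1 // => j _; rewrite hg mulr0. Qed.

Lemma lmul_at f g A B : has_val f A -> has_val g B -> lmul f g (A + B) = f A * g B.
Proof.
move=> hfA hgB; have la := lbound_le hfA; have lb := lbound_le hgB.
case: hfA => _ hf; case: hgB => _ hg.
rewrite /lmul /=.
set a := lbound f; set b := lbound g.
have hj0 : (absz (A - a)%R < (absz (A + B - a - b)%R).+1)%N by lia.
rewrite (bigD1 (Ordinal hj0)) //= big1 ?addr0.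
  have -> : a + (absz (A - a))%:Z = A by lia.
  by have -> : A + B - a - (absz (A - a))%:Z = B by lia.
move=> j hj.
have hne : (nat_of_ord j != absz (A - a)).
  by apply: contra hj => /eqP e; apply/eqP; apply: val_inj => /=.
case: (ltP (a + j%:Z) A) => h; first by rewrite hf // mul0r.
by rewrite hg ?mulr0 //; lia.
Qed.

Lemma has_val_lone : has_val (lone R) 0.
Proof. split; first by rewrite /lone eqxx oner_neq0. by move=> k hk; rewrite /lone; case: eqP => //; lia. Qed.

Lemma lpow_val x v : has_val x v -> forall i : nat,
  has_val (lpow x i) (i%:Z * v) /\ lpow x i (i%:Z * v) = x v ^+ i.
Proof.
move=> hx; elim=> [|i [[hne hlow] hval]].
  by rewrite mul0r expr0; split; [exact: has_val_lone | rewrite /lpow /= /lone eqxx].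
have e : (i.+1)%:Z * v = v + i%:Z * v by rewrite -addn1 PoszD mulrDl mul1r addrC.
have hv : has_val (lpow x i) (i%:Z * v) by split.
have hm : lpow x i.+1 (v + i%:Z * v) = x v * x v ^+ i.
  by rewrite /lpow iterS -/(lpow x i) (lmul_at hx hv) hval.
rewrite e exprS; split; last by [].
split; first by rewrite hm mulf_neq0 // ?expf_neq0 //; case: hx.
move=> k hk; rewrite /lpow iterS -/(lpow x i).
by apply: (lmul_low (proj2 hx) hlow).
Qed.

Lemma lpow_zero x : (forall k, x k = 0) -> forall (i : nat) n, lpow x i.+1 n = 0.
Proof. by move=> hx i n; rewrite /lpow iterS; apply: lmul_zero_l. Qed.

Lemma exists_val f : laurentP f -> (exists n, f n != 0) -> exists A, has_val f A.
Proof.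
move=> [N hN] [n hn].
have hNn : N <= n by case: (lerP N n) => // h; move: hn; rewrite hN // eqxx.
pose P := fun m : nat => f (N + m%:Z) != 0.
have exP : exists m, P m.
  by exists (absz (n - N)); rewrite /P; have -> : N + (absz (n - N))%:Z = n by lia.
case: (ex_minnP exP) => m hm hmin.
exists (N + m%:Z); split => // k hk.
case: (ltP k N) => h; first exact: hN.
have hk' : (absz (k - N)%R < m)%N by lia.
have : ~~ P (absz (k - N)) by apply: contraTN hk' => /hmin; rewrite -leqNgt.
rewrite /P negbK; have -> : N + (absz (k - N))%:Z = k by lia.
by move/eqP.
Qed.

End LaurentVal.

Definition UM (d : nat) (nz : 'I_d.+1 -> bool) (V : 'I_d.+1 -> int) : Prop :=
  forall v : int, exists i0, nz i0 /\
    forall i, i != i0 -> nz i -> V i0 + (i0 : nat)%:Z * v < V i + (i : nat)%:Z * v.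

Lemma nonroot (R : idomainType) d (b : 'I_d.+1 -> int -> R) nz V :
  (forall i, if nz i then has_val (b i) (V i) else forall k, b i k = 0) ->
  nz ord0 -> UM nz V -> forall x, laurentP x -> ~ (forall n, leval b x n = 0).
Proof.
move=> hb h0 hum x hx hall.
case: (excluded_middle_informative (exists n, x n != 0)) => hxz; last first.
  have hz : forall k, x k = 0.
    by move=> k; case: (x k =P 0) => // /eqP hk; case: hxz; exists k.
  have := hall (V ord0); rewrite /leval (bigD1 ord0) //= big1; last first.
    case=> [[|i'] hi'] //= _; exact: lmul_zero_r (lpow_zero hz i').
  have hb0 := hb ord0; rewrite h0 in hb0.
  rewrite addr0 -{1}(addr0 (V ord0)) /lpow /= (lmul_at hb0 (has_val_lone R)).
  by rewrite /lone eqxx mulr1 => e; case: hb0; rewrite e eqxx.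
have [v hv] := exists_val hx hxz.
have [i0 [hi0 hmin]] := hum v.
have := hall (V i0 + (i0:nat)%:Z * v); rewrite /leval (bigD1 i0) //= big1; last first.
  move=> i hi; have := hb i; case hnz: (nz i) => hbi; last exact: lmul_zero_l.
  have hlt := hmin i hi hnz.
  apply: (@lmul_low _ _ _ (V i0 + (i0:nat)%:Z * v - (i:nat)%:Z * v + 1) ((i:nat)%:Z * v)).
  - move=> k hk; apply: (proj2 hbi); lia.
  - exact: (proj2 (proj1 (lpow_val hv i))).
  - lia.
have hb0 := hb i0; rewrite hi0 in hb0.
have [hp hpv] := lpow_val hv i0.
rewrite addr0 (lmul_at hb0 hp) hpv => /eqP; rewrite mulf_eq0 expf_eq0.
case: hb0 => /negbTE -> _; case: hv => /negbTE -> _; by rewrite andbF.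
Qed.

Lemma seg (l i r Vl Vi Vr v m : int) : l < i -> i < r ->
  (r - l) * Vi > (r - i) * Vl + (i - l) * Vr ->
  m <= Vl + l * v -> m <= Vr + r * v -> m < Vi + i * v.
Proof.
move=> hli hir hs hl hr.
have e : (r - l) * (Vi + i * v) > (r - i) * (Vl + l * v) + (i - l) * (Vr + r * v).
  have -> : (r - i) * (Vl + l * v) + (i - l) * (Vr + r * v)
     = (r - i) * Vl + (i - l) * Vr + (r - l) * (i * v) by ring.
  by rewrite mulrDr ltrD2r.
have h1 : (r - i) * m <= (r - i) * (Vl + l * v) by rewrite ler_wpM2l //; lia.
have h2 : (i - l) * m <= (i - l) * (Vr + r * v) by rewrite ler_wpM2l //; lia.
have : (r - l) * m < (r - l) * (Vi + i * v).
  have -> : (r - l) * m = (r - i) * m + (i - l) * m by ring.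
  lia.
by rewrite ltr_pM2l //; lia.
Qed.

Section UMs.
Variables (d : nat) (nz : 'I_d.+1 -> bool) (V : 'I_d.+1 -> int).
Local Notation z i := ((i : nat)%:Z).

Lemma UM2 (p q : 'I_d.+1) : (p < q)%N -> nz p -> nz q ->
  (forall v : int, V p + z p * v <> V q + z q * v) ->
  (forall i : 'I_d.+1, i != p -> i != q -> nz i ->
     (p < i < q)%N /\ (z q - z p) * V i > (z q - z i) * V p + (z i - z p) * V q) ->
  UM nz V.
Proof.
move=> hpq hp hq hne hoth v.
have [hlt|hge] := ltP (V p + z p * v) (V q + z q * v).
- exists p; split => // i hip hi.
  case: (eqVneq i q) => [->//|hiq].
  have [/andP[h1 h2] hs] := hoth i hip hiq hi.
  apply: (seg (l:=z p) (r:=z q) _ _ hs) => //; lia.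
- have hlt : V q + z q * v < V p + z p * v by move: (hne v); lia.
  exists q; split => // i hiq hi.
  case: (eqVneq i p) => [->//|hip].
  have [/andP[h1 h2] hs] := hoth i hip hiq hi.
  apply: (seg (l:=z p) (r:=z q) _ _ hs) => //; lia.
Qed.

Lemma UM3 (p j q : 'I_d.+1) : (p < j)%N -> (j < q)%N -> nz p -> nz j -> nz q ->
  (forall v : int, V p + z p * v <> V j + z j * v) ->
  (forall v : int, V j + z j * v <> V q + z q * v) ->
  (z q - z p) * V j < (z q - z j) * V p + (z j - z p) * V q ->
  (forall i : 'I_d.+1, i != p -> i != j -> i != q -> nz i ->
     ((p < i < j)%N /\ (z j - z p) * V i > (z j - z i) * V p + (z i - z p) * V j) \/
     ((j < i < q)%N /\ (z q - z j) * V i > (z q - z i) * V j + (z i - z j) * V q)) ->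
  UM nz V.
Proof.
move=> hpj hjq hp hj hq hne1 hne2 hC hoth v.
set ep := V p + z p * v; set ej := V j + z j * v; set eq := V q + z q * v.
have hC' : (z q - z p) * ej < (z q - z j) * ep + (z j - z p) * eq.
  rewrite /ep /ej /eq.
  have -> : (z q - z j) * (V p + z p * v) + (z j - z p) * (V q + z q * v)
    = (z q - z j) * V p + (z j - z p) * V q + (z q - z p) * (z j * v) by ring.
  by rewrite mulrDr ltrD2r.
have hpos : 0 < z q - z p by lia.
have htie : ep = eq -> ej < ep.
  move=> e; move: hC'; rewrite -e -mulrDl.
  have -> : z q - z j + (z j - z p) = z q - z p by ring.
  by rewrite ltr_pM2l.
have n1 := hne1 v; have n2 := hne2 v; rewrite -/ep -/ej -/eq in n1 n2.
have fin : forall i0, nz i0 -> V i0 + z i0 * v <= ep -> V i0 + z i0 * v <= ej ->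
    V i0 + z i0 * v <= eq ->
    (forall k, (k == p) || (k == j) || (k == q) -> k != i0 ->
        V i0 + z i0 * v < V k + z k * v) ->
  exists i0, nz i0 /\ (forall i, i != i0 -> nz i -> V i0 + z i0 * v < V i + z i * v).
  move=> i0 hn hm1 hm2 hm3 hk; exists i0; split => // i hii0 hi.
  case hkey: ((i == p) || (i == j) || (i == q)); first exact: hk.
  move: hkey => /negbT; rewrite !negb_or => /andP[/andP[hip hij] hiq].
  case: (hoth i hip hij hiq hi) => [[/andP[a1 a2] hs]|[/andP[a1 a2] hs]].
    by apply: (seg (l:=z p) (r:=z j) _ _ hs) => //; lia.
  by apply: (seg (l:=z j) (r:=z q) _ _ hs) => //; lia.
have [h1|h1] := ltP ej ep; have [h2|h2] := ltP ej eq.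
- apply: (fin j) => //; rewrite -/ej; try lia.
  by move=> k /orP[/orP[]|] /eqP -> hk; rewrite -?/ep -?/eq -?/ej //; rewrite eqxx in hk.
- have hqe : eq < ej by lia.
  apply: (fin q) => //; rewrite -/eq; try lia.
  by move=> k /orP[/orP[]|] /eqP -> hk; rewrite -?/ep -?/eq -?/ej //; try lia; rewrite eqxx in hk.
- have hpe : ep < ej by lia.
  apply: (fin p) => //; rewrite -/ep; try lia.
  by move=> k /orP[/orP[]|] /eqP -> hk; rewrite -?/ep -?/eq -?/ej //; try lia; rewrite eqxx in hk.
- have [h3|h3] := ltP ep eq.
  + apply: (fin p) => //; rewrite -/ep; try lia.
    by move=> k /orP[/orP[]|] /eqP -> hk; rewrite -?/ep -?/eq -?/ej //; try lia; rewrite eqxx in hk.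
  + have h4 : eq < ep by case: (eqVneq ep eq) => [/htie|]; lia.
    apply: (fin q) => //; rewrite -/eq; try lia.
    by move=> k /orP[/orP[]|] /eqP -> hk; rewrite -?/ep -?/eq -?/ej //; try lia; rewrite eqxx in hk.
Qed.
End UMs.

Definition ndiv (m x : int) := forall t : int, x <> m * t.

Lemma ndiv_small (m r : int) : 0 < r < m -> ndiv m r /\ ndiv m (- r).
Proof.
move=> /andP[h1 h2]; split => t e.
- case: (lerP t 0) => ht; nia.
- case: (lerP 0 t) => ht; nia.
Qed.

Lemma ndiv_shift (m x y : int) : ndiv m x -> ndiv m (x - m * y).
Proof. by move=> h t e; apply: (h (t + y)); rewrite mulrDr -e; ring. Qed.

Lemma farL (l i r Vi Vr w M D : int) : 0 <= l -> l < i -> i < r -> r <= D ->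
  -M <= Vi <= M -> -M <= Vr <= M -> 0 <= M -> w < - (3 * D * (M + 1)) ->
  (r - l) * Vi > (r - i) * w + (i - l) * Vr.
Proof.
move=> h0 h1 h2 h3 /andP[a1 a2] /andP[b1 b2] hM hw.
have f7 : 0 <= D * (M + 1) by apply: mulr_ge0; lia.
have f8 : 3 * D * (M + 1) = 3 * (D * (M + 1)) by ring.
have f1 : 0 <= (r - l) * (Vi + M) by apply: mulr_ge0; lia.
have f2 : 0 <= (D - (r - l)) * M by apply: mulr_ge0; lia.
have f3 : 0 <= (i - l) * (M - Vr) by apply: mulr_ge0; lia.
have f4 : 0 <= (D - (i - l)) * M by apply: mulr_ge0; lia.
have f5 : 0 <= (r - i - 1) * (- w) by apply: mulr_ge0; lia.
have e1 : - (D * M) <= (r - l) * Vi by nia.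
have e2 : (i - l) * Vr <= D * M by nia.
have e3 : (r - i) * w <= w by nia.
have f6 : 0 <= D * M by apply: mulr_ge0; lia.
have e4 : 3 * D * (M + 1) >= 2 * (D * M) by nia.
lia.
Qed.

Lemma farR (l i r Vl Vi w M D : int) : 0 <= l -> l < i -> i < r -> r <= D ->
  -M <= Vi <= M -> -M <= Vl <= M -> 0 <= M -> w < - (3 * D * (M + 1)) ->
  (r - l) * Vi > (r - i) * Vl + (i - l) * w.
Proof.
move=> h0 h1 h2 h3 /andP[a1 a2] /andP[b1 b2] hM hw.
have f7 : 0 <= D * (M + 1) by apply: mulr_ge0; lia.
have f8 : 3 * D * (M + 1) = 3 * (D * (M + 1)) by ring.
have f1 : 0 <= (r - l) * (Vi + M) by apply: mulr_ge0; lia.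
have f2 : 0 <= (D - (r - l)) * M by apply: mulr_ge0; lia.
have f3 : 0 <= (r - i) * (M - Vl) by apply: mulr_ge0; lia.
have f4 : 0 <= (D - (r - i)) * M by apply: mulr_ge0; lia.
have f5 : 0 <= (i - l - 1) * (- w) by apply: mulr_ge0; lia.
have e1 : - (D * M) <= (r - l) * Vi by nia.
have e2 : (r - i) * Vl <= D * M by nia.
have e3 : (i - l) * w <= w by nia.
have f6 : 0 <= D * M by apply: mulr_ge0; lia.
have e4 : 3 * D * (M + 1) >= 2 * (D * M) by nia.
lia.
Qed.

Lemma farC (l j r Vl Vr w M D : int) : 0 <= l -> l < j -> j < r -> r <= D ->
  -M <= Vl <= M -> -M <= Vr <= M -> 0 <= M -> w < - (3 * D * (M + 1)) ->
  (r - l) * w < (r - j) * Vl + (j - l) * Vr.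
Proof.
move=> h0 h1 h2 h3 /andP[a1 a2] /andP[b1 b2] hM hw.
have f7 : 0 <= D * (M + 1) by apply: mulr_ge0; lia.
have f8 : 3 * D * (M + 1) = 3 * (D * (M + 1)) by ring.
have f1 : 0 <= (r - j) * (Vl + M) by apply: mulr_ge0; lia.
have f2 : 0 <= (D - (r - j)) * M by apply: mulr_ge0; lia.
have f3 : 0 <= (j - l) * (Vr + M) by apply: mulr_ge0; lia.
have f4 : 0 <= (D - (j - l)) * M by apply: mulr_ge0; lia.
have f5 : 0 <= (r - l - 1) * (- w) by apply: mulr_ge0; lia.
have e1 : - (D * M) <= (r - j) * Vl by nia.
have e2 : - (D * M) <= (j - l) * Vr by nia.
have e3 : (r - l) * w <= w by nia.
have f6 : 0 <= D * M by apply: mulr_ge0; lia.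
have e4 : 3 * D * (M + 1) >= 2 * (D * M) by nia.
lia.
Qed.

Lemma far (w0 P B : int) : 0 < P -> exists k : int, w0 - P * k < B.
Proof.
move=> hP; exists (`|w0| + `|B| + 1).
have : P * (`|w0| + `|B| + 1) >= `|w0| + `|B| + 1 by nia.
have := ler_norm w0; have := ler_norm (- B); rewrite normrN.
lia.
Qed.

Section Final.
Variables (d : nat) (nz : 'I_d.+1 -> bool) (V : 'I_d.+1 -> int) (M : int).
Hypothesis hd : (2 <= d)%N.
Hypothesis hM0 : 0 <= M.
Hypothesis hMb : forall i, -M <= V i <= M.
Local Notation z i := ((i : nat)%:Z).

Definition nzw (j : 'I_d.+1) := fun i => (i == j) || nz i.
Definition Vw (j : 'I_d.+1) (w : int) := fun i => if i == j then w else V i.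

Lemma mid_ok (j : 'I_d.+1) w0 : (0 < j)%N -> (j < d)%N -> nz ord0 -> nz ord_max ->
  ndiv (z j) (w0 - V ord0) -> ndiv (d%:Z - z j) (w0 - V ord_max) ->
  exists w, UM (nzw j) (Vw j w).
Proof.
move=> hj0 hjd hn0 hnd nd1 nd2.
have hP : 0 < z j * (d%:Z - z j) by apply: mulr_gt0; lia.
have [k hk] := @far w0 _ (- (3 * d%:Z * (M + 1))) hP.
set w := w0 - z j * (d%:Z - z j) * k.
have n1 : ndiv (z j) (w - V ord0).
  have -> : w - V ord0 = (w0 - V ord0) - z j * ((d%:Z - z j) * k) by rewrite /w; ring.
  exact: ndiv_shift.
have n2 : ndiv (d%:Z - z j) (w - V ord_max).
  have -> : w - V ord_max = (w0 - V ord_max) - (d%:Z - z j) * (z j * k) by rewrite /w; ring.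
  exact: ndiv_shift.
have hw : w < - (3 * d%:Z * (M + 1)) by exact: hk.
have j0 : (ord0 == j) = false by apply/negbTE; apply/eqP => e; move: hj0; rewrite -e.
have jd : (ord_max == j) = false by apply/negbTE; apply/eqP => e; move: hjd; rewrite -e /= ltnn.
exists w; apply: (UM3 (p:=ord0) (j:=j) (q:=ord_max)) => //.
- by rewrite /nzw j0.
- by rewrite /nzw eqxx.
- by rewrite /nzw jd.
- move=> v; rewrite /Vw j0 eqxx /= => e; apply: (n1 (- v)); rewrite -[w](addrK (z j * v)) -e; ring.
- move=> v; rewrite /Vw jd eqxx /= => e; apply: (n2 v); rewrite -[w](addrK (z j * v)) e; ring.
- rewrite /Vw j0 jd eqxx /= subr0.
  have := hMb ord0; have := hMb ord_max.
  move=> a b; have := @farC 0 (z j) d%:Z (V ord0) (V ord_max) w M d%:Z; rewrite !subr0; apply; lia.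
- move=> i hi0 hij hid; rewrite /nzw (negbTE hij) /= => hi.
  rewrite /Vw (negbTE hij) j0 jd eqxx /=.
  have i0 : (i : nat) != 0%N by apply: contra hi0 => /eqP e; apply/eqP/val_inj.
  have id : (i : nat) != d by apply: contra hid => /eqP e; apply/eqP/val_inj.
  have ij : (i : nat) != j by apply: contra hij => /eqP e; apply/eqP/val_inj.
  have il := ltn_ord i.
  have := hMb i; have := hMb ord0; have := hMb ord_max => a b c.
  case: (ltnP i j) => h.
  + left; split; first by apply/andP; split; lia.
    have := @farR 0 (z i) (z j) (V ord0) (V i) w M d%:Z; rewrite !subr0; apply; lia.
  + right; split; first by apply/andP; split; lia.
    have := @farL (z j) (z i) d%:Z (V i) (V ord_max) w M d%:Z; apply; lia.
Qed.


Lemma ord0_max : (ord0 == ord_max :> 'I_d.+1) = false.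
Proof. by apply/negbTE; apply/eqP => e; move: (congr1 val e) => /=; lia. Qed.

Lemma end0_ok : nz ord_max -> exists w, UM (nzw ord0) (Vw ord0 w).
Proof.
move=> hnd.
have hP : 0 < d%:Z by lia.
have [k hk] := @far (V ord_max + 1) _ (- (3 * d%:Z * (M + 1))) hP.
set w := V ord_max + 1 - d%:Z * k.
have n1 : ndiv d%:Z (w - V ord_max).
  have -> : w - V ord_max = 1 - d%:Z * k by rewrite /w; ring.
  apply: ndiv_shift; have hs : 0 < (1:int) < d%:Z by lia.
  exact: (ndiv_small hs).1.
have hw : w < - (3 * d%:Z * (M + 1)) by exact: hk.
have qj : (ord_max == ord0 :> 'I_d.+1) = false by rewrite eq_sym ord0_max.
exists w; apply: (UM2 (p:=ord0) (q:=ord_max)) => //.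
- by rewrite /nzw qj.
- move=> v; rewrite /Vw qj eqxx /= => e; apply: (n1 v); rewrite -[w](addr0) -(mul0r v) e; ring.
- move=> i hi0 hid; rewrite /nzw (negbTE hi0) /= => hi.
  rewrite /Vw (negbTE hi0) qj eqxx /=.
  have i0 : (i : nat) != 0%N by apply: contra hi0 => /eqP e; apply/eqP/val_inj.
  have id : (i : nat) != d by apply: contra hid => /eqP e; apply/eqP/val_inj.
  have il := ltn_ord i.
  have := hMb i; have := hMb ord_max => a b.
  split; first by apply/andP; split; lia.
  have := @farL 0 (z i) d%:Z (V i) (V ord_max) w M d%:Z; rewrite !subr0; apply; lia.
Qed.

Lemma endd_ok : nz ord0 -> exists w, UM (nzw ord_max) (Vw ord_max w).
Proof.
move=> hn0.
have hP : 0 < d%:Z by lia.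
have [k hk] := @far (V ord0 + 1) _ (- (3 * d%:Z * (M + 1))) hP.
set w := V ord0 + 1 - d%:Z * k.
have n1 : ndiv d%:Z (w - V ord0).
  have -> : w - V ord0 = 1 - d%:Z * k by rewrite /w; ring.
  apply: ndiv_shift; have hs : 0 < (1:int) < d%:Z by lia.
  exact: (ndiv_small hs).1.
have hw : w < - (3 * d%:Z * (M + 1)) by exact: hk.
exists w; apply: (UM2 (p:=ord0) (q:=ord_max)) => //.
- by rewrite /nzw ord0_max.
- by rewrite /nzw eqxx.
- move=> v; rewrite /Vw ord0_max eqxx /= => e; apply: (n1 (- v)).
  rewrite -[w](addrK (d%:Z * v)) -e; ring.
- move=> i hi0 hid; rewrite /nzw (negbTE hid) /= => hi.
  rewrite /Vw (negbTE hid) ord0_max eqxx /=.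
  have i0 : (i : nat) != 0%N by apply: contra hi0 => /eqP e; apply/eqP/val_inj.
  have id : (i : nat) != d by apply: contra hid => /eqP e; apply/eqP/val_inj.
  have il := ltn_ord i.
  have := hMb i; have := hMb ord0 => a b.
  split; first by apply/andP; split; lia.
  have := @farR 0 (z i) d%:Z (V ord0) (V i) w M d%:Z; rewrite !subr0; apply; lia.
Qed.

Lemma zero_ok (j : 'I_d.+1) : d = 4%N -> (j : nat) = 2%N -> nz ord0 -> nz ord_max ->
  (forall i : 'I_d.+1, ((i:nat) == 1%N) || ((i:nat) == 3%N) -> ~~ nz i) ->
  ~ (exists t, V ord_max - V ord0 = 2 * t) ->
  UM (fun i => (i != j) && nz i) V.
Proof.
move=> e4 ej hn0 hnd h13 hpar.
have j0 : (ord0 == j) = false by apply/negbTE; apply/eqP => e; move: ej; rewrite -e.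
have jd : (ord_max == j) = false.
  by apply/negbTE; apply/eqP => e; move: ej; rewrite -e /= e4.
apply: (UM2 (p:=ord0) (q:=ord_max)) => //; try (by rewrite ?j0 ?jd ?hn0 ?hnd); try (by rewrite /=; lia).
- move=> v /= e; apply: hpar; exists (- (2 * v)).
  have h4 : (d%:Z) * v = 4 * v by rewrite e4.
  move: e; rewrite /= => e; lia.
- move=> i hi0 hid /andP[hij hi].
  have i0 : (i : nat) != 0%N by apply: contra hi0 => /eqP e; apply/eqP/val_inj.
  have id : (i : nat) != d by apply: contra hid => /eqP e; apply/eqP/val_inj.
  have ij : (i : nat) != j by apply: contra hij => /eqP e; apply/eqP/val_inj.
  have il := ltn_ord i.
  have : ((i:nat) == 1%N) || ((i:nat) == 3%N) by move: ij id il; rewrite ej; lia.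
  by move/h13; rewrite hi.
Qed.


Lemma ndiv_two_pm (m a b : int) : 3 <= m -> ~ ndiv m (a + 1 - b) -> ndiv m (a - 1 - b).
Proof.
move=> hm hno t2 e2; apply: hno => t1 e1.
have : m * (t1 - t2) = 2 by rewrite mulrBr -e1 -e2; ring.
case: (lerP (t1 - t2) 0) => h; nia.
Qed.

Lemma final_arith (j : 'I_d.+1) : (j:nat) != 1%N -> (j:nat) != d.-1 ->
  (forall i : 'I_d.+1, i != j -> ((i:nat) == 0%N) || ((i:nat) == d) -> nz i) ->
  (d = 4%N -> (j:nat) = 2%N -> forall i : 'I_d.+1, ((i:nat) == 1%N) || ((i:nat) == 3%N) -> ~~ nz i) ->
  (exists w, UM (nzw j) (Vw j w)) \/
  [/\ (j:nat) != 0%N, (j:nat) != d & UM (fun i => (i != j) && nz i) V].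
Proof.
move=> hj1 hjd hend h4.
case: (eqVneq (j:nat) 0%N) => hj0.
  have -> : j = ord0 by apply: val_inj.
  left; apply: end0_ok; apply: hend; last by rewrite /= eqxx orbT.
  by apply/eqP => e; move: (congr1 val e) => /=; lia.
case: (eqVneq (j:nat) d) => hjd'.
  have -> : j = ord_max by apply: val_inj.
  left; apply: endd_ok; apply: hend; last by [].
  by apply/eqP => e; move: (congr1 val e) => /=; lia.
have hn0 : nz ord0 by apply: hend; [apply/eqP => e; move: hj0; rewrite -e | by []].
have hnd : nz ord_max.
  by apply: hend; [apply/eqP => e; move: hjd'; rewrite -e /= eqxx | by rewrite /= eqxx orbT].
have jl := ltn_ord j.
have hj2 : (2 <= j)%N by lia.
have hjd2 : (j <= d - 2)%N by lia.
have hjl : (0 < j)%N by lia.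
have hjr : (j < d)%N by lia.
have s1 : 0 < (1:int) < z j by lia.
case: (leqP 3 (d - j)) => h3.
  left; have hm : 3 <= d%:Z - z j by lia.
  case: (excluded_middle_informative (ndiv (d%:Z - z j) (V ord0 + 1 - V ord_max))) => hy.
    apply: (@mid_ok j (V ord0 + 1)) => //.
    have -> : V ord0 + 1 - V ord0 = 1 by ring.
    exact: (ndiv_small s1).1.
  apply: (@mid_ok j (V ord0 - 1)) => //; last exact: ndiv_two_pm.
  have -> : V ord0 - 1 - V ord0 = - 1 by ring.
    exact: (ndiv_small s1).2.
have e2 : d%:Z - z j = 2 by lia.
have s2 : 0 < (1:int) < 2 by [].
case: (leqP 3 j) => hj3.
  left; have hm : 3 <= z j by lia.
  case: (excluded_middle_informative (ndiv (z j) (V ord_max + 1 - V ord0))) => hy.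
    apply: (@mid_ok j (V ord_max + 1)) => //; rewrite e2.
    have -> : V ord_max + 1 - V ord_max = 1 by ring.
    exact: (ndiv_small s2).1.
  apply: (@mid_ok j (V ord_max - 1)) => //; first exact: ndiv_two_pm.
  rewrite e2.
  have -> : V ord_max - 1 - V ord_max = - 1 by ring.
    exact: (ndiv_small s2).2.
have d4 : d = 4%N by lia.
have j2 : (j : nat) = 2%N by lia.
case: (excluded_middle_informative (exists t, V ord_max - V ord0 = 2 * t)) => hp.
  left; case: hp => t ht.
  apply: (@mid_ok j (V ord0 + 1)) => //; rewrite ?e2.
    have -> : V ord0 + 1 - V ord0 = 1 by ring.
    exact: (ndiv_small s1).1.
  move=> t' e; lia.
right; split; [by apply/eqP; lia|by apply/eqP; lia|].
exact: zero_ok d4 j2 hn0 hnd (h4 d4 j2) hp.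
Qed.

End Final.

Section GameProof.
Variables (F : fieldType) (K : fieldType) (iota : {rmorphism F -> K}).
Variables (d : nat) (D2 : (int -> K) -> Prop).
Hypothesis hD2 : is_lsubring D2.
Hypothesis hd2 : (2 <= d)%N.
Hypothesis hd3 : d != 3%N.

Definition goalP (a : 'I_d.+1 -> int -> F) : Prop :=
  forall x, D2 x -> ~ (forall n : int, leval (fun i m => iota (a i m)) x n = 0).

Definition St := 'I_d.+1 -> option (int -> F).
Definition Valid (s : St) := forall i c, s i = Some c -> coef_valid i c.
Definition Bd : {set 'I_d.+1} := [set i : 'I_d.+1 | ((i:nat) == 1%N) || ((i:nat) == d.-1)].
Definition Opn (s : St) : {set 'I_d.+1} := [set i | ~~ isSome (s i)].
Definition Zc (s : St) : Prop := forall k : 'I_d.+1, ((k:nat) == 1%N) || ((k:nat) == 3%N) ->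
  s k = None \/ s k = Some (lzero F).
Definition ext (s : St) : Prop := [/\ d = 4%N, (exists k : 'I_d.+1, (k:nat) = 2%N /\ s k = None) & ~ Zc s].

Definition mono (w : int) : int -> F := fun n => if n == w then 1 else 0.

Lemma mono_valid (j : 'I_d.+1) w : coef_valid j (mono w).
Proof.
split; first by exists w => n hn; rewrite /mono; case: eqP => // e; lia.
by move=> _; exists w; rewrite /mono eqxx oner_neq0.
Qed.

Lemma iota_val (c : int -> F) : laurentP c ->
  exists p : bool * int, if p.1 then has_val (fun m => iota (c m)) p.2
                         else forall k, iota (c k) = 0.
Proof.
move=> hc.
case: (excluded_middle_informative (exists n, iota (c n) != 0)) => h.
  have hl : laurentP (fun m => iota (c m)).
    by case: hc => N hN; exists N => n hn; rewrite hN // rmorph0.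
  by have [A hA] := exists_val hl h; exists (true, A).
exists (false, 0) => k /=; case: (iota (c k) =P 0) => // /eqP hk.
by case: h; exists k.
Qed.

Lemma final_move (s : St) (j : 'I_d.+1) :
  Valid s -> (forall i, s i = None <-> i = j) -> j \notin Bd -> ~ ext s ->
  exists c, coef_valid j c /\ goalP (fun i => odflt (lzero F) (upd s j c i)).
Proof.
move=> hv hop hjB hext.
pose ai i := odflt (lzero F) (s i).
have hai : forall i, laurentP (ai i).
  move=> i; rewrite /ai; case e: (s i) => [c|] /=; first by case: (hv _ _ e).
  by exists 0.
have [P hP] := fin_all_exists (fun i => iota_val (hai i)).
pose nz i := (P i).1; pose V i := (P i).2.
pose M := \sum_(i < d.+1) `|V i|.
have hM0 : 0 <= M by apply: sumr_ge0.
have hMb : forall i, -M <= V i <= M.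
  by move=> i; rewrite -ler_norml /M (bigD1 i) //= lerDl sumr_ge0.
have hsi : forall i, i != j -> s i = Some (ai i).
  move=> i hij; rewrite /ai; case e: (s i) => [c|] //.
  by move: hij; rewrite ((hop i).1 e) eqxx.
have hj1 : (j:nat) != 1%N by apply: contra hjB => e; rewrite inE e.
have hjd : (j:nat) != d.-1 by apply: contra hjB => e; rewrite inE e orbT.
have hend : forall i : 'I_d.+1, i != j -> ((i:nat) == 0%N) || ((i:nat) == d) -> nz i.
  move=> i hij hi; have [_ hn] := hv _ _ (hsi i hij); have [n hn'] := hn hi; move: hn'.
  have := hP i; rewrite /nz; case: (P i) => [[] A] //= hz.
  by rewrite -(fmorph_eq0 iota) hz eqxx.
have h4 : d = 4%N -> (j:nat) = 2%N -> forall i : 'I_d.+1,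
    ((i:nat) == 1%N) || ((i:nat) == 3%N) -> ~~ nz i.
  move=> e4 ej i hi.
  have hZ : Zc s.
    by case: (excluded_middle_informative (Zc s)) => // hz; case: hext; split => //; exists j; split => //; apply/(hop j).
  have hij : i != j by apply/eqP => e; move: hi; rewrite e ej.
  have hai0 : ai i = lzero F.
    case: (hZ i hi) => e; first by move: hij; rewrite ((hop i).1 e) eqxx.
    by move: (hsi i hij); rewrite e => -[].
  have := hP i; rewrite /nz; case: (P i) => [[] A] //= [].
  by rewrite hai0 /lzero rmorph0 eqxx.
have hx : forall x, D2 x -> laurentP x by case: hD2.
have hbj : forall c i, i != j -> (fun m => iota (odflt (lzero F) (upd s j c i) m)) = (fun m => iota (ai i m)).
  by move=> c i hij; rewrite /upd (negbTE hij) /ai.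
case: (@final_arith d nz V M hd2 hM0 hMb j hj1 hjd hend h4) => [[w hum]|[hj0 hjd' hum]].
- exists (mono w); split; first exact: mono_valid.
  move=> x hxD; apply: (@nonroot K d _ (nzw nz j) (Vw V j w)) => //; last exact: hx.
    move=> i; rewrite /nzw /Vw; case: (eqVneq i j) => [->|hij] /=.
      rewrite /upd eqxx /=; split; first by rewrite /mono eqxx rmorph1 oner_neq0.
      by move=> k hk; rewrite /mono; case: eqP => [e|_]; [lia|rewrite rmorph0].
    rewrite /upd (negbTE hij) -/(ai i); have := hP i; rewrite /nz /V; by case: (P i) => [[] A] /= h; exact: h.
  rewrite /nzw; case: (eqVneq ord0 j) => //= h0; apply: hend => //; by rewrite eq_sym.
- exists (lzero F); split.
    split; first by exists 0.
    by move=> /orP[] /eqP e; [move: hj0|move: hjd']; rewrite e eqxx.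
  move=> x hxD; apply: (@nonroot K d _ (fun i => (i != j) && nz i) V) => //; last exact: hx.
    move=> i; case: (eqVneq i j) => [->|hij] /=.
      by move=> k; rewrite /upd eqxx /= /lzero rmorph0.
    rewrite /upd (negbTE hij) -/(ai i); have := hP i; rewrite /nz /V; by case: (P i) => [[] A] /= h; exact: h.
  have h0 : (ord0 : 'I_d.+1) != j by apply/eqP => e; move: hj0; rewrite -e eqxx.
  by rewrite h0 /=; apply: hend.
Qed.


Definition badn (s : St) : nat :=
  #|Bd :&: Opn s| + (if excluded_middle_informative (ext s) then 1 else 0)%N.

Definition Inv (n : nat) (s : St) :=
  [/\ Valid s, #|Opn s| = n & (2 * badn s <= n.-1)%N].

Lemma Opn_upd (s : St) i c : s i = None -> Opn (upd s i c) = Opn s :\ i.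
Proof.
move=> hi; apply/setP => k; rewrite !inE /upd.
by case: (eqVneq k i) => [->|hk] //=; rewrite hi.
Qed.

Lemma card_Opn_upd (s : St) i c : s i = None -> #|Opn (upd s i c)| = (#|Opn s| - 1)%N.
Proof.
move=> hi; rewrite Opn_upd // (cardsD1 i (Opn s)) inE hi /=; by rewrite addnC addnK.
Qed.

Lemma cntB_upd (s : St) i c : s i = None ->
  #|Bd :&: Opn (upd s i c)| = (#|Bd :&: Opn s| - (i \in Bd))%N.
Proof.
move=> hi; rewrite Opn_upd // setIDA (cardsD1 i (Bd :&: Opn s)).
have -> : (i \in Bd :&: Opn s) = (i \in Bd) by rewrite in_setI [i \in Opn s]inE hi andbT.
by rewrite addKn.
Qed.

Lemma cntB_sub (s : St) i c : s i = None -> (#|Bd :&: Opn (upd s i c)| <= #|Bd :&: Opn s|)%N.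
Proof. by move=> hi; rewrite cntB_upd //; lia. Qed.

Lemma ext_upd (s : St) i c : s i = None -> ext (upd s i c) ->
  ext s \/ (d = 4%N /\ (((i:nat) == 1%N) || ((i:nat) == 3%N))).
Proof.
move=> hi [e4 [k [hk hks]] hZ].
case: (excluded_middle_informative (((i:nat) == 1%N) || ((i:nat) == 3%N))) => h; first by right.
left; split => //.
  by exists k; split => //; move: hks; rewrite /upd; case: eqP.
move=> hZs; apply: hZ => k' hk'; rewrite /upd; case: (eqVneq k' i) => [e|_]; last exact: hZs.
by move: h; rewrite -e hk'.
Qed.

Lemma ext_upd0 (s : St) i : ext (upd s i (lzero F)) -> ext s.
Proof.
move=> [e4 [k [hk hks]] hZ]; split => //.
  by exists k; split => //; move: hks; rewrite /upd; case: eqP.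
move=> hZs; apply: hZ => k' hk'; rewrite /upd; case: (eqVneq k' i) => [e|_]; last exact: hZs.
by right.
Qed.

Lemma Valid_upd (s : St) i c : Valid s -> coef_valid i c -> Valid (upd s i c).
Proof.
move=> hv hc k c'; rewrite /upd; case: (eqVneq k i) => [->|_]; last exact: hv.
by move=> [<-].
Qed.

Lemma inBd4 (i : 'I_d.+1) : d = 4%N -> (i \in Bd) = (((i:nat) == 1%N) || ((i:nat) == 3%N)).
Proof. by move=> e; rewrite inE; have -> : d.-1 = 3%N by rewrite e. Qed.

Lemma badn_upd (s : St) i c : s i = None -> (badn (upd s i c) <= badn s)%N.
Proof.
move=> hi; rewrite /badn cntB_upd //.
case: excluded_middle_informative => h2; case: excluded_middle_informative => h1 //=; try lia.
case: (ext_upd hi h2) => [hh|[e4 h]]; first by case: h1.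
rewrite inBd4 // h.
have : (0 < #|Bd :&: Opn s|)%N.
  by apply/card_gt0P; exists i; rewrite in_setI [i \in Opn s]inE hi andbT inBd4.
rewrite /=; lia.
Qed.


Lemma lzero_valid (i : 'I_d.+1) : (i:nat) != 0%N -> (i:nat) != d -> coef_valid i (lzero F).
Proof.
move=> h0 hd; split; first by exists 0.
by move=> /orP[] /eqP e; [move: h0|move: hd]; rewrite e eqxx.
Qed.

Lemma lone_valid (i : 'I_d.+1) : coef_valid i (lone F).
Proof.
split; first by exists 0 => n hn; rewrite /lone; case: eqP => // e; lia.
by move=> _; exists 0; rewrite /lone eqxx oner_neq0.
Qed.

Lemma badn_upd0 (s : St) i : s i = None -> i \in Bd -> ((badn (upd s i (lzero F))).+1 <= badn s)%N.
Proof.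
move=> hi hB; rewrite /badn cntB_upd // hB.
have : (0 < #|Bd :&: Opn s|)%N.
  by apply/card_gt0P; exists i; rewrite in_setI [i \in Opn s]inE hi andbT.
case: excluded_middle_informative => h2; case: excluded_middle_informative => h1 //=; try lia.
by case: h1; apply: ext_upd0 h2.
Qed.

Lemma badn_zero (s : St) i c : #|Bd :&: Opn s| = 0%N -> ~ ext s -> s i = None ->
  badn (upd s i c) = 0%N.
Proof.
move=> h0 hn hi; rewrite /badn cntB_upd // h0 /=.
case: excluded_middle_informative => h2 //=.
case: (ext_upd hi h2) => [//|[e4 h]].
have : (0 < #|Bd :&: Opn s|)%N.
  by apply/card_gt0P; exists i; rewrite in_setI [i \in Opn s]inE hi andbT inBd4.
by rewrite h0.
Qed.

Lemma Opn_nonempty (s : St) n : #|Opn s| = n.+1 -> exists i, s i = None.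
Proof.
move=> h; have : (0 < #|Opn s|)%N by rewrite h.
case/card_gt0P => i; rewrite inE; case e: (s i) => //; by exists i.
Qed.

Lemma nwfS (A : Type) (dd : nat) (valid : 'I_dd.+1 -> A -> Prop) goal (dflt : A) n s :
  nora_wins_from valid goal dflt n.+1 s =
  if odd n.+1 then
    exists i c, [/\ s i = None, valid i c & nora_wins_from valid goal dflt n (upd s i c)]
  else forall i c, s i = None -> valid i c -> nora_wins_from valid goal dflt n (upd s i c).
Proof. by []. Qed.

Lemma win n : forall s, (0 < n)%N -> Inv n s -> nora_wins_from (@coef_valid F d) goalP (lzero F) n s.
Proof.
elim: n => [//|n IH] s _ [hv hc hb].
case: n IH hc hb => [|m] IH hc hb.
  have /cards1P [j hj] : #|Opn s| == 1%N by rewrite hc.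
  have hmem : forall i, (i \in Opn s) = (i == j) by move=> i; rewrite hj in_set1.
  have hop : forall i, s i = None <-> i = j.
    move=> i; have := hmem i; rewrite inE; case: (s i) => [c|] /= e; split => //.
      by move=> hij; rewrite hij eqxx in e.
    by move=> _; apply/eqP; rewrite -e.
  have hb0 : badn s = 0%N by lia.
  have hjB : j \notin Bd.
    apply/negP => hjB; move: hb0; rewrite /badn.
    have : (0 < #|Bd :&: Opn s|)%N by apply/card_gt0P; exists j; rewrite in_setI hjB hmem eqxx.
    lia.
  have hext : ~ ext s.
    move=> he; move: hb0; rewrite /badn; case: excluded_middle_informative => //= _; lia.
  have [c [hcv hg]] := final_move hv hop hjB hext.
  by exists j, c; split => //; apply/(hop j).
have hpar := odd_double_half m; rewrite -muln2 in hpar.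
have IH' : forall s', Inv m.+1 s' -> nora_wins_from (@coef_valid F d) goalP (lzero F) m.+1 s'.
  by move=> s'; apply: IH.
rewrite nwfS; have -> : odd m.+2 = odd m by rewrite /= negbK.
case hodd: (odd m); rewrite hodd /= in hpar.
-
  case: (set_0Vmem (Bd :&: Opn s)) => [h0|[i hi]]; last first.
    move: hi; rewrite in_setI [i \in Opn s]inE => /andP[hB]; case e: (s i) => //= _.
    exists i, (lzero F).
    have hBi : ((i:nat) == 1%N) || ((i:nat) == d.-1) by move: hB; rewrite inE.
    have hval : coef_valid i (lzero F) by apply: lzero_valid; apply/eqP; lia.
    split => //; apply: IH'; split; [exact: Valid_upd | by rewrite card_Opn_upd // hc |].
    have := badn_upd0 e hB; rewrite /=; lia.
  have hc0 : #|Bd :&: Opn s| = 0%N by rewrite h0 cards0.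
  case: (excluded_middle_informative (ext s)) => hx.
    have hx' := hx; case: hx' => e4 [k [hk hks]] _.
    have hval : coef_valid k (lzero F) by apply: lzero_valid; apply/eqP; lia.
    exists k, (lzero F); split => //; apply: IH'; split; [exact: Valid_upd | by rewrite card_Opn_upd // hc |].
    suff -> : badn (upd s k (lzero F)) = 0%N by [].
    rewrite /badn cntB_upd // hc0 /=; case: excluded_middle_informative => //= h.
    case: h => _ [k' [hk' hk's]] _.
    have ekk : k' = k by apply: val_inj; rewrite /= hk hk'.
    by move: hk's; rewrite ekk /upd eqxx.
  have [i e] := Opn_nonempty hc.
  pose c := if ((i:nat) == 0%N) || ((i:nat) == d) then lone F else lzero F.
  have hval : coef_valid i c.
    rewrite /c; case: ifP => h; first exact: lone_valid.
    by apply: lzero_valid; apply/negP => /eqP e'; move: h; rewrite e' eqxx ?orbT.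
  exists i, c; split => //; apply: IH'; split; [exact: Valid_upd | by rewrite card_Opn_upd // hc |].
  by rewrite (badn_zero c hc0 hx e).
-
  move=> i c e hval; apply: IH'; split; [exact: Valid_upd | by rewrite card_Opn_upd // hc |].
  have := badn_upd c e; move: hpar hb; rewrite /=; set h := m./2; lia.
Qed.


Lemma Bd_sub : Bd \subset [set (inord 1 : 'I_d.+1); inord d.-1].
Proof.
apply/subsetP => i; rewrite inE !inE => /orP[] /eqP e; apply/orP; [left|right];
  apply/eqP/val_inj; rewrite /= inordK //; lia.
Qed.

Lemma init_Inv : Inv d.+1 (fun _ => None).
Proof.
have hO : Opn (fun _ => None) = setT by apply/setP => i; rewrite !inE.
split.
- by move=> i c.
- by rewrite hO cardsT card_ord.
- rewrite /badn hO setIT; destruct (excluded_middle_informative _) as [hx|hx].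
    by case: hx => _ _ []; move=> k _; left.
  have := subset_leq_card Bd_sub; rewrite cards2 /=.
  case: (eqVneq d 2%N) => [e2|n2].
    have -> : (inord 1 : 'I_d.+1) == inord d.-1 by apply/eqP; rewrite e2.
    rewrite /=; lia.
  move=> h; have : (#|Bd| <= 2)%N by apply: (leq_trans h); case: (_ != _).
  move: hd3 => /eqP hd3'; lia.
Qed.

End GameProof.

Theorem corollary5 (F : fieldType) (K : closedFieldType) (iota : {rmorphism F -> K})
    (iota_alg : forall x : K, exists2 p : {poly F}, p != 0 & root (map_poly iota p) x)
    (d : nat) (hd : (0 < d)%N) (hd1 : d != 1%N) (hd3 : d != 3%N)
    (D2 : (int -> K) -> Prop) (hD2 : is_lsubring D2) :
  nora_wins_last (@coef_valid F d)
    (fun a : 'I_d.+1 -> int -> F =>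
       forall x, D2 x -> ~ (forall n : int, leval (fun i m => iota (a i m)) x n = 0))
    (lzero F).
Proof.
have hd2 : (2 <= d)%N by move: hd1 => /eqP hd1'; lia.
rewrite /nora_wins_last; exact: (win iota hD2 hd2 hd3 (ltn0Sn _) (init_Inv F hd2 hd3)).
Qed.
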